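(* In the setting of the context, assume $G''(p_1)<0$ and $G''(p_2)<0$, and that $\ell\in(0,\min\{L,1-L\})$ is chosen so that $$\big[(L-\ell)G''(p_1)+(1-L-\ell)G''(p_2)\big]e^{-K_1}+2\ell K_2e^{K_1}<0.$$ Then $I_{\theta_0+c}(1)<0<I_{\theta_0-c}(1)$ for all sufficiently small $c>0$.
   Context: Let $G\in\mathrm{C}^2(\mathbb{R})$ be coercive ($G(p)\to\infty$ as $p\to\pm\infty$), $p_1<p_2$ with $G'(p_1)<0<G'(p_2)$, $L=\frac{G'(p_2)}{G'(p_2)-G'(p_1)}$, $K_1=\max\{|G'(p)|:\,p\in[p_1,p_2]\}$, $K_2=\max\{|G''(p)|:\,p\in[p_1,p_2]\}$. Given $\ell$, let $f$ be a $1$-periodic function in $\mathrm{C}^1(\mathbb{R})$ with $f'$ Lipschitz, $p_1\le f\le p_2$, $f=p_1$ on $[0,L-\ell]$, $f=p_2$ on $[L,1-\ell]$, and $\int_0^1G'(f(x))dx=0$. Define the $1$-periodic Lipschitz potential $V(x)=-f'(x)-G(f(x))$ and $\theta_0=\int_0^1f(x)dx$. For each $\theta\in\mathbb{R}$, $f_\theta\in\mathrm{C}^1(\mathbb{R})$ denotes the unique $1$-periodic function with $\int_0^1f_\theta=\theta$ and $f_\theta'+G(f_\theta)+V=\overline{H}(\theta)$ on $\mathbb{R}$ for some (unique) constant $\overline{H}(\theta)$; and $I_\theta(1)=\int_0^1G'(f_\theta(x))dx$. *)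

(* Defs.v *)
From Stdlib Require Import Reals.
From Coquelicot Require Import Coquelicot.
Open Scope R_scope.

Definition is_C2 (G : R -> R) : Prop :=
  forall x, ex_derive G x /\ ex_derive (Derive G) x /\
            continuous (Derive (Derive G)) x.

Definition is_C1 (g : R -> R) : Prop :=
  forall x, ex_derive g x /\ continuous (Derive g) x.

Definition coercive (G : R -> R) : Prop :=
  forall M : R, exists r : R, forall p : R, r <= Rabs p -> M <= G p.

Definition one_periodic (g : R -> R) : Prop := forall x, g (x + 1) = g x.

Definition lipschitz (g : R -> R) : Prop :=
  exists M : R, forall x y, Rabs (g x - g y) <= M * Rabs (x - y).

Definition is_max_on (h : R -> R) (a b K : R) : Prop :=
  (forall p, a <= p <= b -> h p <= K) /\ (exists p, a <= p <= b /\ h p = K).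

Definition Lval (G : R -> R) (p1 p2 : R) : R :=
  Derive G p2 / (Derive G p2 - Derive G p1).

Definition Vpot (G f : R -> R) (x : R) : R := - Derive f x - G (f x).

(* I_theta(1) = int_0^1 G'(f_theta(x)) dx *)
Definition I1 (G g : R -> R) : R := RInt (fun x => Derive G (g x)) 0 1.

(* Main.v *)
Require Import Defs.
From Stdlib Require Import Reals Lra.
From Coquelicot Require Import Coquelicot.
Open Scope R_scope.

Lemma cont_of_cont (f : R -> R) x : continuous f x -> continuity_pt f x.
Proof. intro H; apply (proj2 (continuity_pt_filterlim f x)); exact H. Qed.

Lemma exd_cont (f : R -> R) x : ex_derive f x -> continuity_pt f x.
Proof. intro H. apply cont_of_cont. exact (ex_derive_continuous f x H). Qed.

Lemma C2_dG (G : R -> R) : is_C2 G -> forall x, is_derive G x (Derive G x).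
Proof. intros H x; apply Derive_correct; apply H. Qed.
Lemma C2_ddG (G : R -> R) : is_C2 G -> forall x, is_derive (Derive G) x (Derive (Derive G) x).
Proof. intros H x; apply Derive_correct; apply H. Qed.
Lemma C2_cG (G : R -> R) : is_C2 G -> forall x, continuity_pt G x.
Proof. intros H x; apply exd_cont; apply H. Qed.
Lemma C2_cdG (G : R -> R) : is_C2 G -> forall x, continuity_pt (Derive G) x.
Proof. intros H x; apply exd_cont; apply H. Qed.
Lemma C2_cddG (G : R -> R) : is_C2 G -> forall x, continuity_pt (Derive (Derive G)) x.
Proof. intros H x; apply cont_of_cont; apply H. Qed.

Lemma mvt_between (F dF : R -> R) u v :
  (forall x, is_derive F x (dF x)) ->
  exists xi, Rmin u v <= xi <= Rmax u v /\ F v - F u = dF xi * (v - u).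
Proof.
  intros HD.
  destruct (MVT_gen F u v dF) as [xi [H1 H2]].
  - intros; apply HD.
  - intros; apply exd_cont. eexists; apply HD.
  - exists xi; split; auto.
Qed.

Definition aq (G f1 f2 : R -> R) (x : R) : R :=
  if Req_EM_T (f2 x) (f1 x) then Derive G (f1 x)
  else (G (f2 x) - G (f1 x)) / (f2 x - f1 x).

Lemma aq_eq G f1 f2 x : G (f2 x) - G (f1 x) = aq G f1 f2 x * (f2 x - f1 x).
Proof.
  unfold aq; destruct (Req_EM_T (f2 x) (f1 x)) as [e|n].
  - rewrite e; ring.
  - field. lra.
Qed.

Lemma aq_mvt G f1 f2 x : is_C2 G ->
  exists xi, Rmin (f1 x) (f2 x) <= xi <= Rmax (f1 x) (f2 x) /\ aq G f1 f2 x = Derive G xi.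
Proof.
  intro HG. unfold aq; destruct (Req_EM_T (f2 x) (f1 x)) as [e|n].
  - exists (f1 x); split; auto. rewrite e, Rmin_left, Rmax_left; lra.
  - destruct (mvt_between G (Derive G) (f1 x) (f2 x) (C2_dG G HG)) as [xi [H1 H2]].
    exists xi; split; auto. rewrite H2; field; lra.
Qed.

Lemma aq_cont G f1 f2 x : is_C2 G -> continuity_pt f1 x -> continuity_pt f2 x ->
  continuity_pt (aq G f1 f2) x.
Proof.
  intros HG c1 c2.
  destruct (Req_EM_T (f2 x) (f1 x)) as [e|n].
  - apply (proj2 (continuity_pt_locally _ _)). intro eps.
    pose proof (C2_cdG G HG (f1 x)) as cd.
    pose proof (proj1 (continuity_pt_locally _ _) cd) as cd'; clear cd; rename cd' into cd.
    destruct (cd eps) as [d0 Hd0].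
    pose proof (proj1 (continuity_pt_locally _ _) c1) as c1'; clear c1; rename c1' into c1. pose proof (proj1 (continuity_pt_locally _ _) c2) as c2'; clear c2; rename c2' into c2.
    destruct (c1 d0) as [d1 Hd1]. destruct (c2 d0) as [d2 Hd2].
    assert (Hd : 0 < Rmin d1 d2) by (apply Rmin_pos; apply cond_pos).
    exists (mkposreal _ Hd). intros y Hy.
    assert (Hy1 : ball x d1 y).
    { apply (ball_le x (Rmin d1 d2)); [apply Rmin_l| exact Hy]. }
    assert (Hy2 : ball x d2 y).
    { apply (ball_le x (Rmin d1 d2)); [apply Rmin_r| exact Hy]. }
    specialize (Hd1 y Hy1). specialize (Hd2 y Hy2).
    destruct (aq_mvt G f1 f2 y HG) as [xi [Hxi Hax]].
    rewrite Hax.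
    assert (Hx : aq G f1 f2 x = Derive G (f1 x)).
    { unfold aq; destruct (Req_EM_T (f2 x) (f1 x)); [reflexivity| contradiction]. }
    rewrite Hx. apply Hd0.
    change (Rabs (xi - f1 x) < d0).
    rewrite e in Hd2.
    apply Rabs_def1.
    + apply Rabs_def2 in Hd1; apply Rabs_def2 in Hd2.
      destruct Hxi as [_ Hxi]. unfold Rmax in Hxi; destruct (Rle_dec (f1 y) (f2 y)); lra.
    + apply Rabs_def2 in Hd1; apply Rabs_def2 in Hd2.
      destruct Hxi as [Hxi _]. unfold Rmin in Hxi; destruct (Rle_dec (f1 y) (f2 y)); lra.
  - assert (cq : continuity_pt (fun y => (G (f2 y) - G (f1 y)) / (f2 y - f1 y)) x).
    { apply (continuity_pt_div (fun y => G (f2 y) - G (f1 y)) (fun y => f2 y - f1 y)).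
      - apply (continuity_pt_minus (fun y => G (f2 y)) (fun y => G (f1 y))).
        + apply (continuity_pt_comp f2 G); auto. apply C2_cG; auto.
        + apply (continuity_pt_comp f1 G); auto. apply C2_cG; auto.
      - apply (continuity_pt_minus f2 f1); auto.
      - lra. }
    apply (continuity_pt_ext_loc (fun y => (G (f2 y) - G (f1 y)) / (f2 y - f1 y)) _ x); [| exact cq].
    assert (cw : continuity_pt (fun y => f2 y - f1 y) x) by (apply (continuity_pt_minus f2 f1); auto).
    pose proof (proj1 (continuity_pt_locally _ _) cw) as cw'; clear cw; rename cw' into cw.
    assert (Hp : 0 < Rabs (f2 x - f1 x)) by (apply Rabs_pos_lt; lra).
    destruct (cw (mkposreal _ Hp)) as [d Hd].
    exists d; intros y Hy. specialize (Hd y Hy). simpl in Hd.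
    unfold aq; destruct (Req_EM_T (f2 y) (f1 y)) as [e|_]; [|reflexivity].
    exfalso. rewrite e in Hd. replace (f1 y - f1 y - (f2 x - f1 x)) with (- (f2 x - f1 x)) in Hd by ring.
    rewrite Rabs_Ropp in Hd; lra.
Qed.

Lemma is_derive_eq (f : R -> R) x l l' : is_derive f x l -> l = l' -> is_derive f x l'.
Proof. intros H ->; exact H. Qed.

Lemma cont_all_exRInt (a : R -> R) : (forall x, continuity_pt a x) -> forall u v, ex_RInt a u v.
Proof.
  intros ca u v. apply (ex_RInt_continuous (V:=R_CompleteNormedModule)). intros z _.
  apply (proj1 (continuity_pt_filterlim a z)). apply ca.
Qed.

Lemma cont_all_derive_RInt (a : R -> R) : (forall x, continuity_pt a x) ->
  forall x, is_derive (fun y => RInt a 0 y) x (a x).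
Proof.
  intros ca x. apply (is_derive_RInt a (fun y => RInt a 0 y) 0 x).
  - apply filter_forall. intro y. apply (RInt_correct (V:=R_CompleteNormedModule)). apply cont_all_exRInt; auto.
  - apply (proj1 (continuity_pt_filterlim a x)). apply ca.
Qed.

Lemma W_core G V f1 f2 H1 H2 :
  is_C2 G -> (forall x, ex_derive f1 x) -> (forall x, ex_derive f2 x) ->
  (forall x, Derive f1 x + G (f1 x) + V x = H1) ->
  (forall x, Derive f2 x + G (f2 x) + V x = H2) ->
  f1 1 = f1 0 -> f2 1 = f2 0 ->
  forall x, 0 <= x <= 1 ->
  Rmin (f2 0 - f1 0) ((f2 0 - f1 0) * exp (RInt (aq G f1 f2) 0 1))
  <= (f2 x - f1 x) * exp (RInt (aq G f1 f2) 0 x) <=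
  Rmax (f2 0 - f1 0) ((f2 0 - f1 0) * exp (RInt (aq G f1 f2) 0 1)).
Proof.
  intros HG d1 d2 E1 E2 P1 P2 x Hx.
  set (a := aq G f1 f2).
  assert (ca : forall y, continuity_pt a y).
  { intro y. apply aq_cont; auto; apply exd_cont; auto. }
  set (B := fun y => RInt a 0 y).
  set (h := H2 - H1).
  set (W := fun y => (f2 y - f1 y) * exp (B y)).
  assert (dW : forall y, is_derive W y (h * exp (B y))).
  { intro y.
    assert (D1 : is_derive (fun t => f2 t - f1 t) y (Derive f2 y - Derive f1 y)).
    { apply (is_derive_minus f2 f1); apply Derive_correct; auto. }
    assert (D2 : is_derive (fun t => exp (B t)) y (a y * exp (B y))).
    { apply (is_derive_comp exp B y (exp (B y)) (a y)).
      - apply is_derive_exp.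
      - apply cont_all_derive_RInt; auto. }
    pose proof (is_derive_mult _ _ y _ _ D1 D2 Rmult_comm) as D.
    apply (is_derive_eq _ _ _ _ D).
    unfold plus, mult; simpl. unfold h.
    pose proof (aq_eq G f1 f2 y) as Ea. fold a in Ea.
    specialize (E1 y); specialize (E2 y).
    replace (Derive f2 y - Derive f1 y) with (H2 - H1 - (G (f2 y) - G (f1 y))) by lra.
    rewrite Ea. ring. }
  assert (cW : forall y, continuity_pt W y).
  { intro y. apply exd_cont. eexists; apply dW. }
  assert (B0 : B 0 = 0). { unfold B. rewrite RInt_point. reflexivity. }
  destruct (MVT_gen W 0 x (fun y => h * exp (B y))) as [c1 [_ Hc1]].
  { intros; apply dW. } { intros; apply cW. }
  destruct (MVT_gen W x 1 (fun y => h * exp (B y))) as [c2 [_ Hc2]].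
  { intros; apply dW. } { intros; apply cW. }
  assert (W0 : W 0 = f2 0 - f1 0). { unfold W; rewrite B0, exp_0; ring. }
  assert (W1 : W 1 = (f2 0 - f1 0) * exp (B 1)). { unfold W; rewrite P1, P2; ring. }
  change ((f2 x - f1 x) * exp (B x)) with (W x).
  change (RInt a 0 1) with (B 1).
  rewrite <- W1, <- W0.
  pose proof (exp_pos (B c1)). pose proof (exp_pos (B c2)).
  destruct (Rle_dec 0 h).
  - assert (0 <= h * exp (B c1)) by (apply Rmult_le_pos; lra).
    assert (0 <= h * exp (B c2)) by (apply Rmult_le_pos; lra).
    assert (W 0 <= W x) by nra. assert (W x <= W 1) by nra.
    unfold Rmin, Rmax; destruct (Rle_dec (W 0) (W 1)); lra.
  - assert (h * exp (B c1) <= 0) by (apply Rmult_le_0_r; lra).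
    assert (h * exp (B c2) <= 0) by (apply Rmult_le_0_r; lra).
    assert (W x <= W 0) by nra. assert (W 1 <= W x) by nra.
    unfold Rmin, Rmax; destruct (Rle_dec (W 0) (W 1)); lra.
Qed.

Lemma W_sign G V f1 f2 H1 H2 :
  is_C2 G -> (forall x, ex_derive f1 x) -> (forall x, ex_derive f2 x) ->
  (forall x, Derive f1 x + G (f1 x) + V x = H1) ->
  (forall x, Derive f2 x + G (f2 x) + V x = H2) ->
  f1 1 = f1 0 -> f2 1 = f2 0 ->
  RInt f1 0 1 < RInt f2 0 1 ->
  forall x, 0 <= x <= 1 -> f1 x < f2 x.
Proof.
  intros HG d1 d2 E1 E2 P1 P2 Hlt.
  pose proof (W_core G V f1 f2 H1 H2 HG d1 d2 E1 E2 P1 P2) as HW.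
  set (e1 := exp (RInt (aq G f1 f2) 0 1)) in HW.
  assert (0 < e1) by apply exp_pos.
  assert (ex1 : ex_RInt f1 0 1).
  { apply cont_all_exRInt. intro; apply exd_cont; auto. }
  assert (ex2 : ex_RInt f2 0 1).
  { apply cont_all_exRInt. intro; apply exd_cont; auto. }
  destruct (Rle_dec (f2 0 - f1 0) 0) as [Hn|Hp].
  - exfalso.
    assert (Hle : forall y, 0 <= y <= 1 -> f2 y <= f1 y).
    { intros y Hy. specialize (HW y Hy). pose proof (exp_pos (RInt (aq G f1 f2) 0 y)).
      assert (Rmax (f2 0 - f1 0) ((f2 0 - f1 0) * e1) <= 0).
      { unfold Rmax; destruct (Rle_dec _ _); nra. }
      nra. }
    assert (RInt f2 0 1 <= RInt f1 0 1).
    { apply RInt_le; auto; try lra. intros y Hy; apply Hle; lra. }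
    lra.
  - intros y Hy. specialize (HW y Hy). pose proof (exp_pos (RInt (aq G f1 f2) 0 y)).
    assert (0 < Rmin (f2 0 - f1 0) ((f2 0 - f1 0) * e1)).
    { unfold Rmin; destruct (Rle_dec _ _); nra. }
    nra.
Qed.

Lemma exp_mono x y : x <= y -> exp x <= exp y.
Proof. intro H; destruct (Rle_lt_or_eq_dec _ _ H) as [h|h]; [left; apply exp_increasing; auto| rewrite h; lra]. Qed.

Lemma abs_le_split x a : Rabs x <= a -> - a <= x <= a.
Proof. unfold Rabs; destruct (Rcase_abs x); lra. Qed.

Lemma RInt_const_R (k a b : R) : RInt (fun _ => k) a b = (b - a) * k.
Proof. rewrite RInt_const. reflexivity. Qed.

Lemma RInt_le_const (f : R -> R) a b k : a <= b -> ex_RInt f a b ->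
  (forall x, a < x < b -> f x <= k) -> RInt f a b <= (b - a) * k.
Proof.
  intros Hab ex Hk. rewrite <- RInt_const_R. apply RInt_le; auto.
  apply ex_RInt_const.
Qed.

Lemma RInt_ge_const (f : R -> R) a b k : a <= b -> ex_RInt f a b ->
  (forall x, a < x < b -> k <= f x) -> (b - a) * k <= RInt f a b.
Proof.
  intros Hab ex Hk. rewrite <- RInt_const_R. apply RInt_le; auto.
  apply ex_RInt_const.
Qed.

Lemma cont_abs_minus (a q : R -> R) x : continuity_pt a x -> continuity_pt q x ->
  continuity_pt (fun y => Rabs (a y - q y)) x.
Proof.
  intros ca cq. apply (continuity_pt_comp (fun y => a y - q y) Rabs).
  - apply (continuity_pt_minus a q); auto.
  - apply Rcontinuity_abs.
Qed.

Lemma cont_scal (w : R -> R) k x : continuity_pt w x -> continuity_pt (fun y => k * w y) x.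
Proof. intro c. apply (continuity_pt_scal w k x c). Qed.

Lemma W_quant (a w q : R -> R) (K1 K c w0 : R) :
  (forall x, continuity_pt a x) -> (forall x, continuity_pt w x) -> (forall x, continuity_pt q x) ->
  (forall x, 0 <= x <= 1 ->
     Rmin w0 (w0 * exp (RInt a 0 1)) <= w x * exp (RInt a 0 x) <= Rmax w0 (w0 * exp (RInt a 0 1))) ->
  0 < w0 ->
  (forall x, 0 <= x <= 1 -> 0 < w x) ->
  (forall x, 0 <= x <= 1 -> Rabs (a x - q x) <= K * w x) ->
  RInt w 0 1 = c -> RInt q 0 1 = 0 ->
  (forall x, 0 <= x <= 1 -> Rabs (q x) <= K1) ->
  (forall x, 0 <= x <= 1 -> w0 * exp (- K1 - 2 * K * c) <= w x <= w0 * exp (K1 + 2 * K * c))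
  /\ w0 <= c * exp (K1 + 2 * K * c).
Proof.
  intros ca cw cq Hb Hw0 Hpos Ha Hc Hq0 Hq.
  assert (exa : forall u v, ex_RInt a u v) by (apply cont_all_exRInt; auto).
  assert (exw : forall u v, ex_RInt w u v) by (apply cont_all_exRInt; auto).
  assert (exq : forall u v, ex_RInt q u v) by (apply cont_all_exRInt; auto).
  assert (exd : forall u v, ex_RInt (fun y => Rabs (a y - q y)) u v).
  { apply cont_all_exRInt; intro; apply cont_abs_minus; auto. }
  assert (exKw : forall u v, ex_RInt (fun y => K * w y) u v).
  { apply cont_all_exRInt; intro; apply cont_scal; auto. }
  assert (HK : 0 <= K).
  { specialize (Ha 0 ltac:(lra)). specialize (Hpos 0 ltac:(lra)).
    pose proof (Rabs_pos (a 0 - q 0)). nra. }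
  assert (Hwx : forall x, 0 <= x <= 1 -> RInt w 0 x <= c).
  { intros x Hx. rewrite <- Hc. rewrite <- (RInt_Chasles w 0 x 1); auto.
    assert (0 <= RInt w x 1).
    { replace 0 with ((1 - x) * 0) by ring. apply RInt_ge_const; auto; try lra.
      intros; left; apply Hpos; lra. }
    unfold plus; simpl; lra. }
  assert (Hdev : forall x, 0 <= x <= 1 -> Rabs (RInt a 0 x - RInt q 0 x) <= K * c).
  { intros x Hx.
    assert (E : RInt a 0 x - RInt q 0 x = RInt (fun y => a y - q y) 0 x).
    { rewrite (RInt_minus a q); auto. }
    rewrite E.
    eapply Rle_trans. apply abs_RInt_le; try lra.
    { apply cont_all_exRInt; intro; apply (continuity_pt_minus a q); auto. }
    eapply Rle_trans. apply (RInt_le _ (fun y => K * w y)); auto; try lra.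
    { intros y Hy; apply Ha; lra. }
    replace (RInt (fun y => K * w y) 0 x) with (K * RInt w 0 x).
    2:{ symmetry. exact (RInt_scal (V:=R_CompleteNormedModule) w 0 x K (exw 0 x)). }
    specialize (Hwx x Hx). nra. }
  assert (HA : forall x, 0 <= x <= 1 -> Rabs (RInt q 0 x) <= K1).
  { intros x Hx. eapply Rle_trans. apply abs_RInt_le; try lra; auto.
    eapply Rle_trans. apply RInt_le_const with (k := K1); try lra; auto.
    { apply cont_all_exRInt; intro; apply (continuity_pt_comp q Rabs); auto. apply Rcontinuity_abs. }
    { intros; apply Hq; lra. }
    assert (0 <= K1). { specialize (Hq 0 ltac:(lra)). pose proof (Rabs_pos (q 0)). lra. }
    nra. }
  set (s := K * c).
  assert (Hs : 0 <= s).
  { unfold s. apply Rmult_le_pos; auto. rewrite <- Hc.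
    assert (HH : (1 - 0) * 0 <= RInt w 0 1).
    { apply RInt_ge_const; auto; try lra. intros; left; apply Hpos; lra. }
    lra. }
  assert (HB1 : Rabs (RInt a 0 1) <= s).
  { pose proof (Hdev 1 ltac:(lra)). rewrite Hq0 in H. rewrite Rminus_0_r in H. exact H. }
  assert (HBx : forall x, 0 <= x <= 1 -> Rabs (RInt a 0 x) <= K1 + s).
  { intros x Hx. pose proof (Hdev x Hx). pose proof (HA x Hx).
    apply abs_le_split in H. apply abs_le_split in H0. apply Rabs_le. fold s in H. lra. }
  apply abs_le_split in HB1.
  assert (e1lo : exp (- s) <= exp (RInt a 0 1)) by (apply exp_mono; lra).
  assert (e1hi : exp (RInt a 0 1) <= exp s) by (apply exp_mono; lra).
  assert (es1 : exp (- s) <= 1) by (rewrite <- exp_0; apply exp_mono; lra).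
  assert (es2 : 1 <= exp s) by (rewrite <- exp_0; apply exp_mono; lra).
  assert (lo : w0 * exp (- s) <= Rmin w0 (w0 * exp (RInt a 0 1))).
  { unfold Rmin; destruct (Rle_dec _ _); nra. }
  assert (hi : Rmax w0 (w0 * exp (RInt a 0 1)) <= w0 * exp s).
  { unfold Rmax; destruct (Rle_dec _ _); nra. }
  assert (Hbounds : forall x, 0 <= x <= 1 -> w0 * exp (- K1 - 2 * K * c) <= w x <= w0 * exp (K1 + 2 * K * c)).
  { intros x Hx. specialize (Hb x Hx). pose proof (HBx x Hx) as Hbx. apply abs_le_split in Hbx.
    set (Bx := RInt a 0 x) in *.
    assert (ex1 : exp (- K1 - s) <= exp (- Bx)) by (apply exp_mono; lra).
    assert (ex2 : exp (- Bx) <= exp (K1 + s)) by (apply exp_mono; lra).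
    assert (Ewx : w x = w x * exp Bx * exp (- Bx)).
    { rewrite Rmult_assoc, <- exp_plus. replace (Bx + - Bx) with 0 by ring. rewrite exp_0; ring. }
    replace (- K1 - 2 * K * c) with (- s + (- K1 - s)) by (unfold s; ring).
    replace (K1 + 2 * K * c) with (s + (K1 + s)) by (unfold s; ring).
    rewrite (exp_plus (- s) (- K1 - s)), (exp_plus s (K1 + s)).
    pose proof (exp_pos (- s)). pose proof (exp_pos (- K1 - s)). pose proof (exp_pos (- Bx)).
    pose proof (exp_pos s). pose proof (exp_pos (K1 + s)).
    rewrite Ewx. pose proof (Hpos x Hx). split.
    - apply Rle_trans with ((w0 * exp (- s)) * exp (- K1 - s)); [right; ring|].
      apply Rmult_le_compat; try nra.
    - apply Rle_trans with ((w0 * exp s) * exp (K1 + s)); [|right; ring].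
      apply Rmult_le_compat; try nra. }
  split; auto.
  assert (Hlow : w0 * exp (- K1 - 2 * K * c) <= c).
  { assert (HH : (1 - 0) * (w0 * exp (- K1 - 2 * K * c)) <= RInt w 0 1).
    { apply RInt_ge_const; auto; try lra. intros; apply Hbounds; lra. }
    lra. }
  assert (Einv : exp (- K1 - 2 * K * c) * exp (K1 + 2 * K * c) = 1).
  { rewrite <- exp_plus. replace (- K1 - 2 * K * c + (K1 + 2 * K * c)) with 0 by ring. apply exp_0. }
  pose proof (exp_pos (K1 + 2 * K * c)).
  apply Rle_trans with (w0 * exp (- K1 - 2 * K * c) * exp (K1 + 2 * K * c)).
  - rewrite Rmult_assoc, Einv; lra.
  - apply Rmult_le_compat_r; lra.
Qed.

Lemma W_final (Phi w r : R -> R) (L l r1 r2 K2 eps m M : R) :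
  (forall x, continuity_pt Phi x) ->
  0 < l -> l < L -> l < 1 - L ->
  (forall x, 0 <= x <= L - l -> r x = r1) ->
  (forall x, L <= x <= 1 - l -> r x = r2) ->
  r1 <= 0 -> r2 <= 0 -> 0 <= eps ->
  (forall x, 0 <= x <= 1 -> Rabs (r x) <= K2) ->
  (forall x, 0 <= x <= 1 -> m <= w x <= M) -> 0 < m ->
  (forall x, 0 <= x <= 1 -> Phi x <= (r x + eps) * w x) ->
  RInt Phi 0 1 <= m * ((L - l) * r1 + (1 - L - l) * r2) + M * (2 * l * K2 + eps).
Proof.
  intros cP Hl1 Hl2 Hl3 Hr1 Hr2 r1n r2n He HK Hw Hm HP.
  assert (ex : forall u v, ex_RInt Phi u v) by (apply cont_all_exRInt; auto).
  assert (gen : forall x, 0 <= x <= 1 -> Phi x <= r x * w x + eps * M).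
  { intros x Hx. specialize (HP x Hx). specialize (Hw x Hx). nra. }
  assert (trans : forall x, 0 <= x <= 1 -> Phi x <= K2 * M + eps * M).
  { intros x Hx. pose proof (gen x Hx). specialize (Hw x Hx). specialize (HK x Hx).
    pose proof (Rle_abs (r x)). pose proof (Rabs_pos (r x)).
    assert (r x * w x <= K2 * w x) by (apply Rmult_le_compat_r; lra).
    assert (K2 * w x <= K2 * M) by (apply Rmult_le_compat_l; lra). lra. }
  assert (I1 : RInt Phi 0 (L - l) <= (L - l - 0) * (r1 * m + eps * M)).
  { apply RInt_le_const; auto; try lra. intros x Hx.
    pose proof (gen x ltac:(lra)) as G0. rewrite (Hr1 x ltac:(lra)) in G0.
    specialize (Hw x ltac:(lra)). assert (r1 * w x <= r1 * m) by (apply Rmult_le_compat_neg_l; lra). lra. }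
  assert (I2 : RInt Phi (L - l) L <= (L - (L - l)) * (K2 * M + eps * M)).
  { apply RInt_le_const; auto; try lra. intros x Hx. apply trans; lra. }
  assert (I3 : RInt Phi L (1 - l) <= (1 - l - L) * (r2 * m + eps * M)).
  { apply RInt_le_const; auto; try lra. intros x Hx.
    pose proof (gen x ltac:(lra)) as G0. rewrite (Hr2 x ltac:(lra)) in G0.
    specialize (Hw x ltac:(lra)). assert (r2 * w x <= r2 * m) by (apply Rmult_le_compat_neg_l; lra). lra. }
  assert (I4 : RInt Phi (1 - l) 1 <= (1 - (1 - l)) * (K2 * M + eps * M)).
  { apply RInt_le_const; auto; try lra. intros x Hx. apply trans; lra. }
  assert (C : RInt Phi 0 1 = RInt Phi 0 (L - l) + RInt Phi (L - l) L + RInt Phi L (1 - l) + RInt Phi (1 - l) 1).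
  { rewrite <- (RInt_Chasles Phi 0 (1 - l) 1); auto.
    rewrite <- (RInt_Chasles Phi 0 L (1 - l)); auto.
    rewrite <- (RInt_Chasles Phi 0 (L - l) L); auto.
  }
  rewrite C.
  assert (S : (L - l - 0) * (r1 * m + eps * M) + (L - (L - l)) * (K2 * M + eps * M)
     + (1 - l - L) * (r2 * m + eps * M) + (1 - (1 - l)) * (K2 * M + eps * M)
     = m * ((L - l) * r1 + (1 - L - l) * r2) + M * (2 * l * K2 + eps)) by ring.
  lra.
Qed.

Lemma final_arith (w0 S K1 l K2 eps eta t E : R) :
  0 < w0 -> E = - (S * exp (- K1) + 2 * l * K2 * exp K1) -> 0 < E -> 0 <= l * K2 -> 0 <= eps ->
  2 * l * K2 * exp K1 * eta <= E / 4 -> 2 * eps * exp K1 <= E / 4 -> eta <= 1 ->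
  exp (2 * t) <= 1 + eta ->
  w0 * exp (- K1 - t) * S + w0 * exp (K1 + t) * (2 * l * K2 + eps) < 0.
Proof.
  intros Hw0 HE HE0 HlK He H1 H2 Heta Ht.
  set (u := exp t). set (v := exp (- t)).
  assert (uv : u * v = 1). { unfold u, v. rewrite <- exp_plus. replace (t + - t) with 0 by ring. apply exp_0. }
  assert (u2 : exp (2 * t) = u * u). { unfold u. rewrite <- exp_plus. f_equal; ring. }
  assert (E1 : exp (- K1 - t) = exp (- K1) * v). { unfold v. rewrite <- exp_plus. f_equal; ring. }
  assert (E2 : exp (K1 + t) = exp K1 * u). { unfold u. rewrite <- exp_plus. reflexivity. }
  rewrite E1, E2. rewrite u2 in Ht.
  assert (pu : 0 < u) by apply exp_pos. assert (pv : 0 < v) by apply exp_pos.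
  pose proof (exp_pos K1) as pk. pose proof (exp_pos (- K1)) as pmk.
  set (X := 2 * l * K2 * exp K1) in *.
  assert (HX : 0 <= X) by (unfold X; nra).
  assert (Hk : (2 * l * K2 + eps) * exp K1 * (u * u) <= X + E / 2).
  { assert (0 <= (2 * l * K2 + eps) * exp K1) by nra.
    apply Rle_trans with ((2 * l * K2 + eps) * exp K1 * (1 + eta)).
    - apply Rmult_le_compat_l; auto.
    - assert (eps * exp K1 * eta <= eps * exp K1) by (assert (0 <= eps * exp K1) by nra; nra).
      replace ((2 * l * K2 + eps) * exp K1 * (1 + eta)) with (X + X * eta + eps * exp K1 + eps * exp K1 * eta) by (unfold X; ring).
      unfold X in *. lra. }
  assert (Hin : S * exp (- K1) + (2 * l * K2 + eps) * exp K1 * (u * u) < 0) by lra.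
  assert (Eq : w0 * (exp (- K1) * v) * S + w0 * (exp K1 * u) * (2 * l * K2 + eps)
             = w0 * v * (S * exp (- K1) + (2 * l * K2 + eps) * exp K1 * (u * u))).
  { transitivity (w0 * (exp (- K1) * v) * S + w0 * (exp K1 * (u * (u * v))) * (2 * l * K2 + eps)).
    - rewrite uv. ring.
    - ring. }
  rewrite Eq.
  assert (0 < w0 * v) by nra.
  nra.
Qed.

Lemma between_bound u v xi z : Rmin u v <= xi <= Rmax u v -> (z = u \/ z = v) ->
  Rabs (xi - z) <= Rabs (v - u).
Proof.
  unfold Rmin, Rmax; intros H Hz. destruct (Rle_dec u v); destruct Hz as [->| ->];
  unfold Rabs; repeat destruct (Rcase_abs _); lra.
Qed.

Lemma between_in u v xi a b : Rmin u v <= xi <= Rmax u v -> a <= u <= b -> a <= v <= b -> a <= xi <= b.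
Proof. unfold Rmin, Rmax; destruct (Rle_dec u v); lra. Qed.

Lemma side G V f1 f2 f H1 H2 p1 p2 K1 K2 L l Pmin Pmax Kpp eps delta eta c E :
  is_C2 G -> (forall x, ex_derive f1 x) -> (forall x, ex_derive f2 x) ->
  (forall x, Derive f1 x + G (f1 x) + V x = H1) ->
  (forall x, Derive f2 x + G (f2 x) + V x = H2) ->
  f1 1 = f1 0 -> f2 1 = f2 0 ->
  RInt f2 0 1 - RInt f1 0 1 = c -> 0 < c -> c <= 1 ->
  (forall x, continuity_pt f x) ->
  (forall x, 0 <= x <= 1 -> f x = f1 x \/ f x = f2 x) ->
  (forall x, 0 <= x <= 1 -> Pmin <= f1 x <= Pmax) ->
  (forall x, 0 <= x <= 1 -> Pmin <= f2 x <= Pmax) ->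
  (forall x, 0 <= x <= 1 -> p1 <= f x <= p2) ->
  RInt (fun x => Derive G (f x)) 0 1 = 0 ->
  (forall p, p1 <= p <= p2 -> Rabs (Derive G p) <= K1) ->
  (forall p, p1 <= p <= p2 -> Rabs (Derive (Derive G) p) <= K2) ->
  (forall p, Pmin <= p <= Pmax -> Rabs (Derive (Derive G) p) <= Kpp) ->
  (forall y z, Pmin <= y <= Pmax -> Pmin <= z <= Pmax -> Rabs (y - z) < delta ->
     Rabs (Derive (Derive G) y - Derive (Derive G) z) < eps) ->
  0 <= K1 -> 0 <= K2 -> 0 <= Kpp ->
  0 < l -> l < L -> l < 1 - L ->
  (forall x, 0 <= x <= L - l -> f x = p1) -> (forall x, L <= x <= 1 - l -> f x = p2) ->
  Derive (Derive G) p1 <= 0 -> Derive (Derive G) p2 <= 0 -> 0 <= eps ->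
  E = - (((L - l) * Derive (Derive G) p1 + (1 - L - l) * Derive (Derive G) p2) * exp (- K1)
          + 2 * l * K2 * exp K1) -> 0 < E ->
  2 * l * K2 * exp K1 * eta <= E / 4 -> 2 * eps * exp K1 <= E / 4 -> eta <= 1 ->
  exp (2 * (2 * Kpp * c)) <= 1 + eta ->
  c * exp (2 * K1 + 4 * Kpp) < delta ->
  RInt (fun x => Derive G (f2 x) - Derive G (f1 x)) 0 1 < 0.
Proof.
  intros HG d1 d2 E1 E2 P1 P2 Hc Hc0 Hc1 cf Hf Hr1 Hr2 Hfr HIf HK1 HK2 HKpp Hunif
    K1p K2p Kpp0 Hl1 Hl2 Hl3 Hfp1 Hfp2 D1n D2n He HE HE0 Heta1 Heps1 Heta Hexp Hdel.
  set (dd := Derive (Derive G)) in *.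
  assert (c1 : forall x, continuity_pt f1 x) by (intro; apply exd_cont; auto).
  assert (c2 : forall x, continuity_pt f2 x) by (intro; apply exd_cont; auto).
  assert (Hlt : RInt f1 0 1 < RInt f2 0 1) by lra.
  pose proof (W_sign G V f1 f2 H1 H2 HG d1 d2 E1 E2 P1 P2 Hlt) as Hs.
  pose proof (W_core G V f1 f2 H1 H2 HG d1 d2 E1 E2 P1 P2) as Hb.
  set (a := aq G f1 f2) in *.
  assert (ca : forall x, continuity_pt a x) by (intro; apply aq_cont; auto).
  assert (cw : forall x, continuity_pt (fun y => f2 y - f1 y) x)
    by (intro; apply (continuity_pt_minus f2 f1); auto).
  assert (cq : forall x, continuity_pt (fun y => Derive G (f y)) x).
  { intro x. apply (continuity_pt_comp f (Derive G)); auto. apply C2_cdG; auto. }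
  assert (Hpos : forall x, 0 <= x <= 1 -> 0 < f2 x - f1 x) by (intros x Hx; specialize (Hs x Hx); lra).
  assert (Hw0 : 0 < f2 0 - f1 0) by (apply Hpos; lra).
  assert (Ha : forall x, 0 <= x <= 1 -> Rabs (a x - Derive G (f x)) <= Kpp * (f2 x - f1 x)).
  { intros x Hx.
    destruct (aq_mvt G f1 f2 x HG) as [xi [Hxi Eax]]. fold a in Eax. rewrite Eax.
    assert (Jxi : Pmin <= xi <= Pmax) by (eapply between_in; eauto).
    assert (Jf : Pmin <= f x <= Pmax) by (destruct (Hf x Hx) as [-> | ->]; auto).
    destruct (mvt_between (Derive G) dd (f x) xi (C2_ddG G HG)) as [zeta [Hz Ez]].
    rewrite Ez.
    assert (Jz : Pmin <= zeta <= Pmax) by (eapply between_in; eauto).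
    rewrite Rabs_mult.
    assert (B1 : Rabs (xi - f x) <= Rabs (f2 x - f1 x)) by (apply between_bound; [exact Hxi| apply Hf; exact Hx]).
    rewrite (Rabs_right (f2 x - f1 x)) in B1 by (left; apply Hpos; auto).
    pose proof (HKpp zeta Jz). pose proof (Rabs_pos (dd zeta)). pose proof (Rabs_pos (xi - f x)).
    apply Rle_trans with (Kpp * Rabs (xi - f x)).
    - apply Rmult_le_compat_r; lra.
    - apply Rmult_le_compat_l; lra. }
  assert (Hint : RInt (fun y => f2 y - f1 y) 0 1 = c).
  { rewrite <- Hc. apply (RInt_minus (V:=R_CompleteNormedModule) f2 f1); apply cont_all_exRInt; auto. }
  assert (Hq : forall x, 0 <= x <= 1 -> Rabs (Derive G (f x)) <= K1) by (intros; apply HK1; auto).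
  destruct (W_quant a (fun y => f2 y - f1 y) (fun y => Derive G (f y)) K1 Kpp c (f2 0 - f1 0)
              ca cw cq Hb Hw0 Hpos Ha Hint HIf Hq) as [Hbd Hw0c].
  set (m := (f2 0 - f1 0) * exp (- K1 - 2 * Kpp * c)) in *.
  set (M := (f2 0 - f1 0) * exp (K1 + 2 * Kpp * c)) in *.
  assert (HM : M < delta).
  { unfold M. apply Rle_lt_trans with (c * exp (K1 + 2 * Kpp * c) * exp (K1 + 2 * Kpp * c)).
    - apply Rmult_le_compat_r; [left; apply exp_pos| exact Hw0c].
    - rewrite Rmult_assoc, <- exp_plus. eapply Rle_lt_trans; [|exact Hdel].
      apply Rmult_le_compat_l; [lra|]. apply exp_mono. nra. }
  assert (HPhi : forall x, 0 <= x <= 1 ->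
     Derive G (f2 x) - Derive G (f1 x) <= (dd (f x) + eps) * (f2 x - f1 x)).
  { intros x Hx.
    destruct (mvt_between (Derive G) dd (f1 x) (f2 x) (C2_ddG G HG)) as [eta' [Heta' Ee]].
    rewrite Ee.
    assert (Jf : Pmin <= f x <= Pmax) by (destruct (Hf x Hx) as [-> | ->]; auto).
    assert (Je : Pmin <= eta' <= Pmax) by (eapply between_in; eauto).
    assert (B1 : Rabs (eta' - f x) <= Rabs (f2 x - f1 x)).
    { apply between_bound; [exact Heta'| apply Hf; exact Hx]. }
    rewrite (Rabs_right (f2 x - f1 x)) in B1 by (left; apply Hpos; auto).
    assert (Hd : Rabs (eta' - f x) < delta) by (specialize (Hbd x Hx); lra).
    specialize (Hunif _ _ Je Jf Hd). apply Rabs_def2 in Hunif.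
    apply Rmult_le_compat_r. left; apply Hpos; auto. lra. }
  assert (cPhi : forall x, continuity_pt (fun y => Derive G (f2 y) - Derive G (f1 y)) x).
  { intro x. apply (continuity_pt_minus (fun y => Derive G (f2 y)) (fun y => Derive G (f1 y))).
    - apply (continuity_pt_comp f2 (Derive G)); auto. apply C2_cdG; auto.
    - apply (continuity_pt_comp f1 (Derive G)); auto. apply C2_cdG; auto. }
  assert (Hm : 0 < m) by (unfold m; pose proof (exp_pos (- K1 - 2 * Kpp * c)); nra).
  pose proof (W_final (fun y => Derive G (f2 y) - Derive G (f1 y)) (fun y => f2 y - f1 y)
     (fun y => dd (f y)) L l (dd p1) (dd p2) K2 eps m M cPhi Hl1 Hl2 Hl3) as WF.
  assert (Hr1' : forall x, 0 <= x <= L - l -> dd (f x) = dd p1) by (intros x Hx; rewrite Hfp1; auto).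
  assert (Hr2' : forall x, L <= x <= 1 - l -> dd (f x) = dd p2) by (intros x Hx; rewrite Hfp2; auto).
  assert (HK2' : forall x, 0 <= x <= 1 -> Rabs (dd (f x)) <= K2) by (intros x Hx; apply HK2; auto).
  pose proof (WF Hr1' Hr2' D1n D2n He HK2' Hbd Hm HPhi) as HW.
  eapply Rle_lt_trans. exact HW.
  unfold m, M.
  apply (final_arith (f2 0 - f1 0) ((L - l) * dd p1 + (1 - L - l) * dd p2) K1 l K2 eps eta (2 * Kpp * c) E); auto.
  nra.
Qed.

Lemma per_1 (g : R -> R) : one_periodic g -> g 1 = g 0.
Proof. intro H. specialize (H 0). rewrite Rplus_0_l in H. exact H. Qed.

Theorem lemma5p3
  (G : R -> R) (p1 p2 K1 K2 ell : R) (f : R -> R)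
  (fth : R -> R -> R) (Hbar : R -> R) :
  is_C2 G -> coercive G ->
  p1 < p2 -> Derive G p1 < 0 -> 0 < Derive G p2 ->
  is_max_on (fun p => Rabs (Derive G p)) p1 p2 K1 ->
  is_max_on (fun p => Rabs (Derive (Derive G) p)) p1 p2 K2 ->
  (* the function f *)
  one_periodic f -> is_C1 f -> lipschitz (Derive f) ->
  (forall x, p1 <= f x <= p2) ->
  (forall x, 0 <= x <= Lval G p1 p2 - ell -> f x = p1) ->
  (forall x, Lval G p1 p2 <= x <= 1 - ell -> f x = p2) ->
  RInt (fun x => Derive G (f x)) 0 1 = 0 ->
  (* f_theta: the 1-periodic C^1 function with mean theta solving
     f_theta' + G(f_theta) + V = Hbar(theta) *)
  (forall th, one_periodic (fth th) /\ is_C1 (fth th) /\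
              RInt (fth th) 0 1 = th /\
              forall x, Derive (fth th) x + G (fth th x) + Vpot G f x = Hbar th) ->
  (* hypotheses of the lemma *)
  Derive (Derive G) p1 < 0 -> Derive (Derive G) p2 < 0 ->
  0 < ell < Rmin (Lval G p1 p2) (1 - Lval G p1 p2) ->
  ((Lval G p1 p2 - ell) * Derive (Derive G) p1
     + (1 - Lval G p1 p2 - ell) * Derive (Derive G) p2) * exp (- K1)
    + 2 * ell * K2 * exp K1 < 0 ->
  exists c0 : R, 0 < c0 /\
    forall c : R, 0 < c < c0 ->
      I1 G (fth (RInt f 0 1 + c)) < 0 /\ 0 < I1 G (fth (RInt f 0 1 - c)).
Proof.
  intros HG _ Hp12 _ _ HK1 HK2 Hper Hf1 _ Hfr Hfp1 Hfp2 HIf Hfth Hdd1 Hdd2 Hell Hineq.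
  set (L := Lval G p1 p2) in *.
  set (th0 := RInt f 0 1).
  set (dd := Derive (Derive G)) in *.
  destruct Hell as [Hl0 Hlm].
  destruct (proj1 (Rmin_Rgt L (1 - L) ell) Hlm) as [HlL HlL'].
  assert (Sth : forall th, (forall x, ex_derive (fth th) x) /\
     (forall x, Derive (fth th) x + G (fth th x) + Vpot G f x = Hbar th) /\
     fth th 1 = fth th 0 /\ RInt (fth th) 0 1 = th).
  { intro th. destruct (Hfth th) as [P [C [I E]]]. repeat split; auto.
    - intro x; apply C. - apply per_1; auto. }
  assert (df : forall x, ex_derive f x) by (intro x; apply Hf1).
  assert (Ef : forall x, Derive f x + G (f x) + Vpot G f x = 0) by (intro x; unfold Vpot; ring).
  assert (Pf : f 1 = f 0) by (apply per_1; auto).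
  assert (cf : forall x, continuity_pt f x) by (intro; apply exd_cont; auto).
  assert (cmp_up : forall th, th0 < th -> forall x, 0 <= x <= 1 -> f x < fth th x).
  { intros th Hth. destruct (Sth th) as [d [E [P I]]].
    apply (W_sign G (Vpot G f) f (fth th) 0 (Hbar th)); auto. rewrite I; exact Hth. }
  assert (cmp_dn : forall th, th < th0 -> forall x, 0 <= x <= 1 -> fth th x < f x).
  { intros th Hth. destruct (Sth th) as [d [E [P I]]].
    apply (W_sign G (Vpot G f) (fth th) f (Hbar th) 0); auto. rewrite I; exact Hth. }
  assert (cmp : forall th th', th < th' -> forall x, 0 <= x <= 1 -> fth th x < fth th' x).
  { intros th th' Hth. destruct (Sth th) as [d [E [P I]]]. destruct (Sth th') as [d' [E' [P' I']]].
    apply (W_sign G (Vpot G f) (fth th) (fth th') (Hbar th) (Hbar th')); auto. rewrite I, I'; exact Hth. }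
  destruct (continuity_ab_maj (fth (th0 + 1)) 0 1 ltac:(lra)) as [xM [HxM _]].
  { intros; apply exd_cont. apply (proj1 (Sth _)). }
  destruct (continuity_ab_min (fth (th0 - 1)) 0 1 ltac:(lra)) as [xm [Hxm _]].
  { intros; apply exd_cont. apply (proj1 (Sth _)). }
  set (Pmax := fth (th0 + 1) xM) in *.
  set (Pmin := fth (th0 - 1) xm) in *.
  assert (fJ : forall x, 0 <= x <= 1 -> Pmin <= f x <= Pmax).
  { intros x Hx. split.
    - apply Rle_trans with (fth (th0 - 1) x); [apply Hxm; auto| left; apply cmp_dn; auto; lra].
    - apply Rle_trans with (fth (th0 + 1) x); [left; apply cmp_up; auto; lra| apply HxM; auto]. }
  assert (HPP : Pmin <= Pmax) by (pose proof (fJ 0 ltac:(lra)); lra).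
  destruct (continuity_ab_maj (fun p => Rabs (dd p)) Pmin Pmax HPP) as [pK [HpK _]].
  { intros p _. apply (continuity_pt_comp dd Rabs). apply C2_cddG; auto. apply Rcontinuity_abs. }
  set (Kpp := Rabs (dd pK)) in *.
  assert (Kpp0 : 0 <= Kpp) by apply Rabs_pos.
  destruct HK1 as [HK1b [q1 [Hq1 Eq1]]].
  destruct HK2 as [HK2b [q2 [Hq2 Eq2]]].
  assert (K1p : 0 <= K1) by (rewrite <- Eq1; apply Rabs_pos).
  assert (K2p : 0 <= K2) by (rewrite <- Eq2; apply Rabs_pos).
  set (E := - (((L - ell) * dd p1 + (1 - L - ell) * dd p2) * exp (- K1) + 2 * ell * K2 * exp K1)).
  assert (HE : 0 < E) by (unfold E; lra).
  set (X := 2 * ell * K2 * exp K1).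
  assert (HX : 0 <= X) by (unfold X; pose proof (exp_pos K1); apply Rmult_le_pos; [nra| lra]).
  set (tt := E / (4 * (X + 1))).
  assert (Htt : tt * (4 * (X + 1)) = E) by (unfold tt; field; lra).
  assert (Htt0 : 0 < tt) by (unfold tt; apply Rdiv_lt_0_compat; lra).
  set (eta := Rmin 1 tt).
  assert (eta0 : 0 < eta) by (apply Rmin_pos; lra).
  assert (eta1 : eta <= 1) by apply Rmin_l.
  assert (etat : eta <= tt) by apply Rmin_r.
  assert (Heta : X * eta <= E / 4) by nra.
  set (eps := E / (8 * exp K1)).
  pose proof (exp_pos K1) as eK1.
  assert (eps0 : 0 < eps) by (unfold eps; apply Rdiv_lt_0_compat; lra).
  assert (Heps : 2 * eps * exp K1 <= E / 4) by (unfold eps; right; field; lra).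
  destruct (Heine_cor2 (f := dd) (a := Pmin) (b := Pmax)
     (fun p _ => C2_cddG G HG p) (mkposreal eps eps0)) as [delta Hdelta].
  assert (lneta : 0 < ln (1 + eta)).
  { rewrite <- ln_1. apply ln_increasing; lra. }
  pose proof (exp_pos (2 * K1 + 4 * Kpp)) as eB.
  pose proof (cond_pos delta) as dpos.
  exists (Rmin (Rmin 1 (ln (1 + eta) / (4 * Kpp + 1))) (delta / exp (2 * K1 + 4 * Kpp))).
  split.
  { apply Rmin_pos; [apply Rmin_pos; [lra| apply Rdiv_lt_0_compat; lra]| apply Rdiv_lt_0_compat; lra]. }
  intros c [Hc0 Hc].
  assert (Hc1 : c < 1).
  { eapply Rlt_le_trans; [exact Hc|]. eapply Rle_trans; apply Rmin_l. }
  assert (Hc2 : c < ln (1 + eta) / (4 * Kpp + 1)).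
  { eapply Rlt_le_trans; [exact Hc|]. eapply Rle_trans; [apply Rmin_l| apply Rmin_r]. }
  assert (Hc3 : c < delta / exp (2 * K1 + 4 * Kpp)).
  { eapply Rlt_le_trans; [exact Hc|]. apply Rmin_r. }
  assert (Hexp : exp (2 * (2 * Kpp * c)) <= 1 + eta).
  { rewrite <- (exp_ln (1 + eta)) by lra. apply exp_mono.
    apply (Rmult_lt_compat_r (4 * Kpp + 1)) in Hc2; [|lra].
    unfold Rdiv in Hc2. rewrite Rmult_assoc, Rinv_l, Rmult_1_r in Hc2 by lra. nra. }
  assert (Hdel : c * exp (2 * K1 + 4 * Kpp) < delta).
  { apply (Rmult_lt_compat_r (exp (2 * K1 + 4 * Kpp))) in Hc3; [|lra].
    unfold Rdiv in Hc3. rewrite Rmult_assoc, Rinv_l, Rmult_1_r in Hc3 by lra. exact Hc3. }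
  assert (Hunif : forall y z, Pmin <= y <= Pmax -> Pmin <= z <= Pmax -> Rabs (y - z) < delta ->
     Rabs (dd y - dd z) < eps).
  { intros y z Hy Hz Hyz. apply (Hdelta y z Hy Hz Hyz). }
  assert (HKpp : forall p, Pmin <= p <= Pmax -> Rabs (dd p) <= Kpp) by (intros; apply HpK; auto).
  assert (HK1' : forall p, p1 <= p <= p2 -> Rabs (Derive G p) <= K1) by (intros; apply HK1b; auto).
  assert (HK2' : forall p, p1 <= p <= p2 -> Rabs (dd p) <= K2) by (intros; apply HK2b; auto).
  assert (Hfr' : forall x, 0 <= x <= 1 -> p1 <= f x <= p2) by (intros; apply Hfr).
  assert (D1n : dd p1 <= 0) by lra. assert (D2n : dd p2 <= 0) by lra.
  assert (cdG : forall g : R -> R, (forall x, continuity_pt g x) -> forall u v, ex_RInt (fun x => Derive G (g x)) u v).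
  { intros g cg u v. apply cont_all_exRInt. intro x. apply (continuity_pt_comp g (Derive G)); auto. apply C2_cdG; auto. }
  split.
  -
    set (gp := fth (th0 + c)).
    destruct (Sth (th0 + c)) as [dgp [Egp [Pgp Igp]]].
    assert (cgp : forall x, continuity_pt gp x) by (intro; apply exd_cont; auto).
    assert (Hside := side G (Vpot G f) f gp f 0 (Hbar (th0 + c)) p1 p2 K1 K2 L ell Pmin Pmax Kpp eps delta eta c E
      HG df dgp Ef Egp Pf Pgp).
    assert (Hlt : RInt (fun x => Derive G (gp x) - Derive G (f x)) 0 1 < 0).
    { assert (A1 : RInt gp 0 1 - RInt f 0 1 = c) by (fold gp in Igp; rewrite Igp; unfold th0; ring).
      assert (A2 : forall x, 0 <= x <= 1 -> f x = f x \/ f x = gp x) by (intros; left; reflexivity).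
      assert (A3 : forall x, 0 <= x <= 1 -> Pmin <= gp x <= Pmax).
      { intros x Hx. pose proof (cmp_up (th0 + c) ltac:(lra) x Hx). pose proof (cmp (th0 + c) (th0 + 1) ltac:(lra) x Hx).
        pose proof (fJ x Hx). pose proof (HxM x Hx). fold gp in H, H0. lra. }
      apply Hside; auto; lra. }
    rewrite (RInt_minus (V:=R_CompleteNormedModule) (fun x => Derive G (gp x)) (fun x => Derive G (f x))) in Hlt by (apply cdG; auto).
    rewrite HIf in Hlt. unfold I1. unfold minus, plus, opp in Hlt; simpl in Hlt. lra.
  -
    set (gn := fth (th0 - c)).
    destruct (Sth (th0 - c)) as [dgn [Egn [Pgn Ign]]].
    assert (cgn : forall x, continuity_pt gn x) by (intro; apply exd_cont; auto).
    assert (Hside := side G (Vpot G f) gn f f (Hbar (th0 - c)) 0 p1 p2 K1 K2 L ell Pmin Pmax Kpp eps delta eta c E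
      HG dgn df Egn Ef Pgn Pf).
    assert (Hlt : RInt (fun x => Derive G (f x) - Derive G (gn x)) 0 1 < 0).
    { assert (A1 : RInt f 0 1 - RInt gn 0 1 = c) by (fold gn in Ign; rewrite Ign; unfold th0; ring).
      assert (A2 : forall x, 0 <= x <= 1 -> f x = gn x \/ f x = f x) by (intros; right; reflexivity).
      assert (A3 : forall x, 0 <= x <= 1 -> Pmin <= gn x <= Pmax).
      { intros x Hx. pose proof (cmp_dn (th0 - c) ltac:(lra) x Hx). pose proof (cmp (th0 - 1) (th0 - c) ltac:(lra) x Hx).
        pose proof (fJ x Hx). pose proof (Hxm x Hx). fold gn in H, H0. lra. }
      apply Hside; auto; lra. }
    rewrite (RInt_minus (V:=R_CompleteNormedModule) (fun x => Derive G (f x)) (fun x => Derive G (gn x))) in Hlt by (apply cdG; auto).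
    rewrite HIf in Hlt. unfold I1. unfold minus, plus, opp in Hlt; simpl in Hlt. lra.
Qed.
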